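(* For any two words $w_0,w_1\in\mathcal{M}_{n_x,n_y}$ (comparable or not) there are decompositions $w_0=w_0^0w_0^1\cdots w_0^{2k-1}$ and $w_1=w_1^0w_1^1\cdots w_1^{2k-1}$ (concatenations) such that for each $i$, $w_0^i$ and $w_1^i$ have the same numbers of $x$'s and of $y$'s, and $w_0^i\le w_1^i$ if $i$ is even while $w_1^i\le w_0^i$ if $i$ is odd. The words $w_0^0,w_1^0,w_0^{2k-1},w_1^{2k-1}$ may be empty, but all other $w_j^i$ are nonempty.
   Context: $\mathcal{M}_{n_x,n_y}$ is the set of words in letters $x,y$ with $n_x$ $x$'s and $n_y$ $y$'s. For words $u,v$ with the same numbers of each letter, $u\le v$ iff for each $i$ the position of the $i$-th $x$ (from the left) in $u$ is at most its position in $v$. *)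

(* Defs.v *)
From mathcomp Require Import all_boot.
Set Implicit Arguments. Unset Strict Implicit. Unset Printing Implicit Defensive.

(* Words in letters x,y are encoded as seq bool: true = x, false = y. *)
Definition word := seq bool.

Definition nx (w : word) : nat := count id w.
Definition ny (w : word) : nat := count negb w.

Definition inM (a b : nat) (w : word) : bool := (nx w == a) && (ny w == b).

Definition xpos (w : word) : seq nat :=
  [seq i <- iota 0 (size w) | nth false w i].

Definition wle (u v : word) : bool :=
  [&& nx u == nx v, ny u == ny v & all2 leq (xpos u) (xpos v)].

(* Main.v *)
Require Import Defs.
From mathcomp Require Import all_boot zify.
Set Implicit Arguments. Unset Strict Implicit. Unset Printing Implicit Defensive.

Lemma xpos_cons b w : xpos (b :: w) = (if b then [:: 0] else [::]) ++ map succn (xpos w).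
Proof.
rewrite /xpos /=.
have -> : iota 1 (size w) = map succn (iota 0 (size w)).
  by rewrite -(addn0 1) iotaDl; apply: eq_map => i; rewrite add1n.
rewrite filter_map; case: b => //=.
Qed.

Lemma size_xpos w : size (xpos w) = nx w.
Proof.
elim: w => [|b w IH] //; rewrite xpos_cons size_cat size_map IH /nx /=.
by case: b.
Qed.

Lemma count_xpos w j : count (fun p => p < j) (xpos w) = nx (take j w).
Proof.
elim: w j => [|b w IH] j; first by case: j.
rewrite xpos_cons count_cat count_map.
case: j => [|j] /=.
  by case: b => /=; rewrite (eq_count (a2 := pred0)) ?count_pred0.
rewrite -IH /nx /=. by case: b.
Qed.

Lemma sorted_xpos w : sorted ltn (xpos w).
Proof. apply: sorted_filter; [exact: ltn_trans | exact: iota_ltn_sorted]. Qed.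

Lemma sorted_count_nth s i j : sorted ltn s -> i < size s ->
  (i < count (fun p => p < j) s) = (nth 0 s i < j).
Proof.
elim: s i => [|x s IH] i //= Hs Hi.
have Hall : all (fun y => x < y) s.
  by apply: (order_path_min ltn_trans Hs).
have Hs' : sorted ltn s by apply: (path_sorted Hs).
have H0 : j <= x -> count (fun p => p < j) s = 0.
  move=> Hx; apply/eqP; rewrite -leqn0 leqNgt -has_count.
  apply/hasPn => y Hy /=; rewrite -leqNgt.
  move/allP: Hall => /(_ y Hy) Hxy; exact: leq_trans Hx (ltnW Hxy).
case: i Hi => [|i] Hi /=.
  case: (ltnP x j) => Hx //=.
  by rewrite H0.
case: (ltnP x j) => Hx /=.
  by rewrite add1n ltnS IH.
rewrite H0 //.
apply/esym/negbTE; rewrite -leqNgt.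
have Hin : nth 0 s i \in s by apply: mem_nth.
move/allP: Hall => /(_ _ Hin) Hxy; exact: leq_trans Hx (ltnW Hxy).
Qed.

Definition pre (x y : word) := forall j, nx (take j y) <= nx (take j x).

Lemma all2_nth (r : nat -> nat -> bool) s t : size s = size t ->
  (forall i, i < size s -> r (nth 0 s i) (nth 0 t i)) -> all2 r s t.
Proof.
elim: s t => [|x s IH] [|y t] //= [Hst] H.
rewrite (H 0 erefl) /=; apply: IH => // i Hi; exact: (H i.+1).
Qed.

Lemma ny_nx w : ny w = size w - nx w.
Proof. by rewrite -(count_predC id w) /ny /nx addKn. Qed.

Lemma prefix_wle u v : size u = size v -> nx u = nx v -> pre u v -> wle u v.
Proof.
move=> Hs Hn Hp; rewrite /wle Hn eqxx !ny_nx Hs Hn eqxx /=.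
apply: all2_nth; first by rewrite !size_xpos.
move=> i Hi; rewrite size_xpos in Hi.
set q := nth 0 (xpos v) i.
have Hv : i < nx (take q.+1 v).
  rewrite -count_xpos sorted_count_nth ?sorted_xpos ?size_xpos -?Hn //.
have Hu : i < nx (take q.+1 u) by apply: leq_trans Hv (Hp _).
rewrite -count_xpos sorted_count_nth ?sorted_xpos ?size_xpos // in Hu.
Qed.

Lemma nx_cat x y : nx (x ++ y) = nx x + nx y.
Proof. by rewrite /nx count_cat. Qed.

Lemma nx_step w j : nx (take j w) <= nx (take j.+1 w) <= (nx (take j w)).+1.
Proof.
rewrite -addn1 takeD nx_cat.
have := count_size id (take 1 (drop j w)); rewrite size_take_min.
rewrite /nx; lia.
Qed.

Lemma pre_cat x1 y1 x2 y2 : size x1 = size y1 -> nx x1 = nx y1 ->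
  pre x1 y1 -> pre x2 y2 -> pre (x1 ++ x2) (y1 ++ y2).
Proof.
move=> Hs Hn H1 H2 j; rewrite !take_cat Hs.
case: ifP => _; first exact: H1.
by rewrite !nx_cat Hn leq_add2l.
Qed.

Definition okp (T : bool) (p : word * word) :=
  [/\ size p.1 = size p.2, nx p.1 = nx p.2 & (if T then pre p.2 p.1 else pre p.1 p.2)].

Lemma okp_cat T p q : okp T p -> okp T q -> okp T (p.1 ++ q.1, p.2 ++ q.2).
Proof.
case=> Hs Hn Hp [Hs' Hn' Hp']; split => /=.
- by rewrite !size_cat Hs Hs'.
- by rewrite !nx_cat Hn Hn'.
- by case: T Hp Hp' => Hp Hp'; apply: pre_cat.
Qed.

Lemma okp_nil T : okp T ([::], [::]).
Proof. by split => //; case: T => j; by case: j. Qed.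

Lemma sign_run u v m : (forall k, 0 < k < m -> nx (take k u) != nx (take k v)) ->
  nx (take 1 v) <= nx (take 1 u) -> forall j, j <= m -> nx (take j v) <= nx (take j u).
Proof.
move=> Hne H1; elim => [|j IH] Hj; first by rewrite !take0.
case: j IH Hj => [|j] IH Hj; first exact: H1.
have Hne0 := Hne j.+1 Hj.
have := IH (ltnW Hj).
have := nx_step u j.+1; have := nx_step v j.+1.
move: Hne0 => /eqP; lia.
Qed.

Lemma first_seg n u v : size u = n.+1 -> size v = n.+1 -> nx u = nx v ->
  exists j sg, 0 < j <= n.+1 /\ okp sg (take j u, take j v).
Proof.
move=> Hu Hv Hn.
have eu : take n.+1 u = u by rewrite -Hu take_size.
have ev : take n.+1 v = v by rewrite -Hv take_size.
pose P := fun j => (0 < j) && (nx (take j u) == nx (take j v)).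
have exP : exists j, P j.
  exists n.+1; by rewrite /P eu ev Hn eqxx.
case: (ex_minnP exP) => m /andP [Hm0 /eqP Hm] Hmin.
have Hmn : m <= n.+1.
  apply: Hmin; by rewrite /P eu ev Hn eqxx.
have Hne : forall k, 0 < k < m -> nx (take k u) != nx (take k v).
  move=> k /andP [Hk0 Hkm]; apply/negP => /eqP Hk.
  have := Hmin k; rewrite /P Hk0 Hk eqxx /= => /(_ isT); rewrite leqNgt Hkm.
  by [].
have Hne' : forall k, 0 < k < m -> nx (take k v) != nx (take k u).
  by move=> k /Hne; rewrite eq_sym.
exists m.
have Hsz : size (take m u) = size (take m v) by rewrite !size_take_min Hu Hv.
case: (leqP (nx (take 1 v)) (nx (take 1 u))) => H1.
- exists false; split; first by rewrite Hm0.
  split => //= j; rewrite -!take_min; exact: (sign_run Hne H1 (geq_minr j m)).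
- exists true; split; first by rewrite Hm0.
  split => //= j; rewrite -!take_min; exact: (sign_run Hne' (ltnW H1) (geq_minr j m)).
Qed.

Definition Dec T u v (ps : seq (word * word)) :=
 [/\ 0 < size ps, flatten (map fst ps) = u, flatten (map snd ps) = v,
  (forall i, i < size ps -> okp (T (+) odd i) (nth ([::],[::]) ps i)) &
  (forall i, 0 < i < size ps -> (nth ([::],[::]) ps i).1 != [::])].

Lemma decomp n : forall u v, size u = n -> size v = n -> nx u = nx v ->
  forall T, exists ps, Dec T u v ps.
Proof.
elim/ltn_ind: n => n IH u v Hu Hv Hn T.
case: n IH Hu Hv => [|n] IH Hu Hv.
  move/size0nil: Hu => ->; move/size0nil: Hv => ->.
  exists [:: ([::], [::])]; split => //.
  - by case=> // _; rewrite addbF; apply: okp_nil.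
  - by case=> [|[]].
have [j [sg [/andP [Hj0 Hjn] Hok]]] := first_seg Hu Hv Hn.
have Hdu : size (drop j u) = n.+1 - j by rewrite size_drop Hu.
have Hdv : size (drop j v) = n.+1 - j by rewrite size_drop Hv.
have Hdn : nx (drop j u) = nx (drop j v).
  have E1 := nx_cat (take j u) (drop j u); have E2 := nx_cat (take j v) (drop j v).
  rewrite !cat_take_drop in E1 E2.
  case: Hok => _ /= Hm _; lia.
have [ps' [Hsz' Hf1 Hf2 Hok' Hne']] := IH (n.+1 - j) ltac:(lia) _ _ Hdu Hdv Hdn sg.
case: ps' Hsz' Hf1 Hf2 Hok' Hne' => [|q ps''] // _ Hf1 Hf2 Hok' Hne'.
pose r := (take j u ++ q.1, take j v ++ q.2).
have Hr : r.1 != [::].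
  rewrite /r /=; apply/negP => /eqP /(congr1 size); rewrite size_cat size_take_min Hu.
  move=> /= ; lia.
have Hdec : Dec sg u v (r :: ps'').
  split => //.
  - by rewrite /= -catA -[q.1 ++ _]/(flatten (map fst (q :: ps''))) Hf1 cat_take_drop.
  - by rewrite /= -catA -[q.2 ++ _]/(flatten (map snd (q :: ps''))) Hf2 cat_take_drop.
  - case=> [|i] Hi /=.
      rewrite addbF /r; apply: (okp_cat (p:=(take j u, take j v))) => //; move: (Hok' 0 isT); by rewrite addbF.
    exact: (Hok' i.+1 Hi).
  - case=> [|i] // Hi; exact: (Hne' i.+1 Hi).
case: (eqVneq T sg) => [-> | HT]; first by exists (r :: ps'').
exists (([::], [::]) :: r :: ps'').
case: Hdec => Hs1 Hf1' Hf2' Hok1 Hne1.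
split => //.
- case=> [|i] Hi; first exact: okp_nil.
  have -> : T (+) odd i.+1 = sg (+) odd i.
    have key : forall a b c : bool, a != b -> a (+) ~~ c = b (+) c by do 3 case.
    exact: key.
  exact: Hok1.
- case=> [|[|i]] // Hi; exact: (Hne1 i.+1 Hi).
Qed.

Lemma size_nx_ny w : size w = nx w + ny w.
Proof. by rewrite /nx /ny -(count_predC id w). Qed.

Theorem mainTheorem10 (a b : nat) (w0 w1 : word) :
  inM a b w0 -> inM a b w1 ->
  exists (k : nat) (s0 s1 : seq word),
    0 < k /\ [/\ size s0 = k.*2, size s1 = k.*2,
        flatten s0 = w0, flatten s1 = w1 &
        forall i, i < k.*2 ->
          [/\ nx (nth [::] s0 i) = nx (nth [::] s1 i),
              ny (nth [::] s0 i) = ny (nth [::] s1 i),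
              (if odd i then wle (nth [::] s1 i) (nth [::] s0 i)
               else wle (nth [::] s0 i) (nth [::] s1 i)) &
              (0 < i < (k.*2).-1 ->
                 nth [::] s0 i != [::] /\ nth [::] s1 i != [::])]].
Proof.
move=> /andP [/eqP Ha0 /eqP Hb0] /andP [/eqP Ha1 /eqP Hb1].
have Hs0 : size w0 = a + b by rewrite size_nx_ny Ha0 Hb0.
have Hs1 : size w1 = a + b by rewrite size_nx_ny Ha1 Hb1.
have [ps [Hsz Hf1 Hf2 Hok Hne]] := decomp Hs0 Hs1 (etrans Ha0 (esym Ha1)) false.
pose s := if odd (size ps) then rcons ps ([::], [::]) else ps.
have Hss : ~~ odd (size s).
  rewrite /s; case: ifP => H; last by rewrite H.
  by rewrite size_rcons /= H.
have Hsz2 : size s = (size s)./2.*2.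
  by rewrite -{1}(odd_double_half (size s)) (negbTE Hss).
have Hpos : 0 < (size s)./2.
  have : 0 < size s by rewrite /s; case: ifP; rewrite ?size_rcons.
  lia.
have Hf1' : flatten (map fst s) = w0.
  by rewrite /s; case: ifP => _ //; rewrite map_rcons -cats1 flatten_cat cats0.
have Hf2' : flatten (map snd s) = w1.
  by rewrite /s; case: ifP => _ //; rewrite map_rcons -cats1 flatten_cat cats0.
have Hnth : forall i, i < size s ->
    okp (odd i) (nth ([::], [::]) s i) /\
    (0 < i < (size s).-1 -> (nth ([::], [::]) s i).1 != [::]).
  move=> i Hi; rewrite /s in Hi *; case: ifP => Ho; rewrite Ho in Hi.
  - rewrite nth_rcons; rewrite size_rcons in Hi.
    case: ltnP => Hip.
      split; first exact: (Hok i Hip).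
      move=> /andP [Hi0 _]; apply: Hne; by rewrite Hi0.
    rewrite if_same.
    split; first exact: okp_nil.
    by rewrite size_rcons /= => /andP [_]; rewrite ltnNge Hip.
  - split; first exact: (Hok i Hi).
    move=> /andP [Hi0 Hi1]; apply: Hne; rewrite Hi0 /=; lia.
exists (size s)./2, (map fst s), (map snd s); split => //.
split; rewrite ?size_map -?Hsz2 //.
move=> i Hi.
have [[Hsi Hni Hpi] Hnei] := Hnth i Hi.
rewrite !(nth_map ([::], [::])) //.
split => //.
- by rewrite !ny_nx Hsi Hni.
- case: (odd i) Hpi => Hpi; apply: prefix_wle => //.
- move=> /Hnei Hne1; split => //.
  by apply/negP => /eqP E; move: Hne1; rewrite -size_eq0 Hsi E.
Qed.
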